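(* Let $G$ be a finite simple graph with $n$ vertices and minimum degree $\delta \ge 10^6$. Then $$\gamma_s(G) \le \frac{\sqrt{6\ln(\delta+1)} + 1.21}{\sqrt{\delta+1}}\, n.$$
   Context: For a vertex $v$ of $G$, $N[v]$ denotes the closed neighbourhood of $v$ (i.e. $v$ together with its neighbours). A signed domination function of $G$ is a function $f: V(G) \to \{-1, 1\}$ such that $\sum_{x \in N[v]} f(x) \ge 1$ for every vertex $v \in V(G)$. The weight of $f$ is $f(V(G)) = \sum_{v \in V(G)} f(v)$. The signed domination number $\gamma_s(G)$ is the minimum weight of a signed domination function of $G$. *)

(* Defs.v *)
From HB Require Import structures.
From mathcomp Require Import all_boot all_order all_algebra.
From mathcomp Require Import all_classical all_reals all_analysis.
Set Implicit Arguments. Unset Strict Implicit. Unset Printing Implicit Defensive.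
Import Order.TTheory GRing.Theory Num.Theory.
Local Open Scope ring_scope.

Definition simple_graph (T : finType) (e : rel T) : Prop :=
  symmetric e /\ irreflexive e.

Definition closed_nbhd (T : finType) (e : rel T) (v : T) : {set T} :=
  v |: [set u | e v u].

Definition degree (T : finType) (e : rel T) (v : T) : nat := #|[set u | e v u]|.

Definition is_min_degree (T : finType) (e : rel T) (delta : nat) : Prop :=
  (forall v, (delta <= degree e v)%N) /\ (exists v, degree e v = delta).

Definition signed_dom_fun (T : finType) (e : rel T) (f : T -> int) : Prop :=
  (forall v, f v = 1 \/ f v = -1) /\
  (forall v, 1 <= \sum_(x in closed_nbhd e v) f x).

Definition weight (T : finType) (f : T -> int) : int := \sum_(x : T) f x.

Definition is_signed_domination_number (T : finType) (e : rel T) (g : int) : Prop :=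
  (exists f, signed_dom_fun e f /\ weight f = g) /\
  (forall f, signed_dom_fun e f -> g <= weight f).

(* Main.v *)
Require Import Defs.
From HB Require Import structures.
From mathcomp Require Import all_boot all_order all_algebra.
From mathcomp Require Import all_classical all_reals all_analysis.
From mathcomp Require Import ring lra.
Import Order.TTheory GRing.Theory Num.Theory.
Local Open Scope ring_scope.
Set Implicit Arguments.
Section Num.
Variable R : realType.

Lemma lnN_facts (N : R) : 100 <= N -> 1/3 <= ln N /\ 6 * ln N < N.
Proof.
move=> hN.
have N0 : 0 < N by lra.
have eN : expR (ln N) = N by rewrite lnK // posrE.
split.
  rewrite -ler_expR eN.
  have h1 := expR_ge1Dx (- (1/3) : R).
  have h2 : expR (1/3 : R) * expR (- (1/3)) = 1 by rewrite -expRD subrr expR0.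
  have h3 := expR_gt0 (1/3 : R).
  nra.
have hL : 0 <= ln N by apply: ln_ge0; lra.
have h := expR_ge1Dxn 2 hL.
rewrite eN in h.
have h' : 1 + ln N ^+ 3 / 6 <= N by exact: h.
case: (ltrP (ln N) 6) => h6; first lra.
nra.
Qed.

Lemma eps_facts (N : R) : 100 <= N ->
  let eps := Num.sqrt (6 * ln N) / Num.sqrt N in
  0 <= eps /\ eps < 1 /\ eps ^+ 2 = 6 * ln N / N.
Proof.
move=> hN eps.
have [h1 h2] := @lnN_facts N hN.
have e2 : eps ^+ 2 = 6 * ln N / N.
  by rewrite /eps expr_div_n !sqr_sqrtr //; lra.
have e0 : 0 <= eps by rewrite /eps divr_ge0 // sqrtr_ge0.
split => //; split => //.
have : eps ^+ 2 < 1 by rewrite e2 ltr_pdivrMr; lra.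
nra.
Qed.

Lemma cN_bound (N c : R) (n : nat) : 100 <= N -> N = n%:R ->
  c = 1 - 3 * ln N / N -> c ^+ n * N ^+ 3 <= 1.
Proof.
move=> hN eN hc.
have [h1 h2] := @lnN_facts N hN.
have c0 : 0 <= c by rewrite hc subr_ge0 ler_pdivrMr; lra.
have cle : c <= expR (- (3 * ln N / N)) by have := expR_ge1Dx (- (3 * ln N / N)); rewrite hc; lra.
have : c ^+ n <= expR (- (3 * ln N / N)) ^+ n by rewrite lerXn2r // ?nnegrE // expR_ge0.
rewrite -expRM_natl -eN.
have -> : N * - (3 * ln N / N) = - (3%:R * ln N) by field; lra.
rewrite expRN expRM_natl lnK ?posrE; last lra.
move=> h; have N3 : 0 < N ^+ 3 by rewrite exprn_gt0 //; lra.
by rewrite -ler_pdivlMr // div1r.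
Qed.

Lemma mono (N c : R) (n k : nat) : 100 <= N -> N = n%:R ->
  c = 1 - 3 * ln N / N -> (n + k)%:R * c ^+ (n + k) <= N * c ^+ n.
Proof.
move=> hN eN hc.
have [h1 h2] := @lnN_facts N hN.
have c0 : 0 <= c by rewrite hc subr_ge0 ler_pdivrMr; lra.
elim: k => [|k IH]; first by rewrite addn0 eN.
rewrite addnS exprS.
apply: le_trans IH.
have hm : N <= (n + k)%:R by rewrite eN ler_nat leq_addr.
have cm : (n + k).+1%:R * c <= (n + k)%:R.
  rewrite hc mulrBr mulr1 -natr1.
  have : 1 <= ((n+k)%:R + 1) * (3 * ln N / N).
    rewrite mulrA ler_pdivlMr; last lra.
    nra.
  lra.
have cp : 0 <= c ^+ (n + k) by rewrite exprn_ge0.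
rewrite mulrA; nra.
Qed.

End Num.

Lemma exprz_le0_ge1 (R : realType) (a : R) (s : int) : 0 < a <= 1 -> s <= 0 -> 1 <= a ^ s.
Proof.
move=> /andP[a0 a1]; case: s => [k|k] hs.
  have -> : k = 0%N by move: hs; rewrite lez_nat; case: k.
  by rewrite expr0z.
rewrite NegzE -exprnN invf_ge1; first by rewrite exprn_ile1 // ltW.
by rewrite exprn_gt0.
Qed.

Lemma claim1 (R : realType) (T : finType) (e : rel T) (g : int) (f : T -> bool) (a : R) :
  0 < a <= 1 -> is_signed_domination_number e g ->
  (g%:~R : R) <= \sum_x (if f x then 1 else -1 : R) +
     \sum_v 2 * #|closed_nbhd e v|%:R * a ^ (\sum_(x in closed_nbhd e v) (if f x then 1 else -1 : int)).
Proof.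
move=> ha [_ hg].
set s := fun v => \sum_(x in closed_nbhd e v) (if f x then 1 else -1 : int).
pose bad := fun v => s v <= 0.
pose F := fun x => if f x || [exists v, bad v && (x \in closed_nbhd e v)] then 1 else -1 : int.
have vN : forall v, v \in closed_nbhd e v by move=> v; rewrite /closed_nbhd setU11.
have sdF : signed_dom_fun e F.
  split; first by move=> x; rewrite /F; case: ifP; auto.
  move=> v; case bv: (bad v).
    rewrite (eq_bigr (fun _ => 1)); last first.
      move=> x hx; rewrite /F.
      have -> : [exists v0, bad v0 && (x \in closed_nbhd e v0)] by apply/existsP; exists v; rewrite bv hx.
      by rewrite orbT.
    by rewrite sumr_const ler1n card_gt0; apply/set0Pn; exists v.
  have : 1 <= s v by rewrite -gtz0_ge1 ltNge; apply/negbT.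
  move/le_trans; apply; apply: ler_sum => x _; rewrite /F.
  by case: (f x) => //=; case: ifP.
have := hg F sdF; rewrite -(ler_int R) => /le_trans; apply.
rewrite /weight rmorph_sum /=.
apply: (@le_trans _ _ (\sum_x ((if f x then 1 else -1 : R) + 2 * \sum_v ((bad v && (x \in closed_nbhd e v))%:R)))).
  apply: ler_sum => x _; rewrite /F.
  have S0 : 0 <= \sum_v ((bad v && (x \in closed_nbhd e v))%:R : R) by apply: sumr_ge0 => v _; rewrite ler0n.
  case: (f x) => /=; first lra.
  case: ifP => [/existsP[v /andP[bv hv]]|_]; last lra.
  have : 1 <= \sum_v ((bad v && (x \in closed_nbhd e v))%:R : R).
    rewrite (bigD1 v) //= bv hv /=; have : 0 <= \sum_(i | i != v) ((bad i && (x \in closed_nbhd e i))%:R : R).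
      by apply: sumr_ge0 => i _; rewrite ler0n.
    lra.
  rewrite /=; lra.
rewrite big_split /= lerD2l -mulr_sumr exchange_big /= mulr_sumr.
apply: ler_sum => v _.
rewrite -mulrA ler_pM2l //.
have -> : \sum_x ((bad v && (x \in closed_nbhd e v))%:R : R) = (bad v)%:R * #|closed_nbhd e v|%:R.
  case: (bad v) => /=; last by rewrite mul0r big1.
  by rewrite mul1r -sumr_const [RHS]big_mkcond; apply: eq_bigr => x _; case: (_ \in _).
case bv: (bad v) => /=.
  rewrite mul1r ler_peMr //; exact: exprz_le0_ge1.
rewrite mul0r mulr_ge0 // exprz_ge0 //; case/andP: ha => ? _; exact: ltW.
Qed.

Lemma expect_prod (R : realType) (T : finType) (q : R) (H : T -> bool -> R) :
 \sum_(f : {ffun T -> bool}) \prod_i ((if f i then q else 1 - q) * H i (f i)) =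
 \prod_i (q * H i true + (1 - q) * H i false).
Proof.
rewrite -(bigA_distr_bigA (fun i j => (if j then q else 1 - q) * H i j)) /=.
by apply: eq_bigr => i _; rewrite big_bool.
Qed.

Lemma powz_prod (R : realType) (T : finType) (A : {set T}) (f : T -> bool) (a : R) :
  a != 0 ->
  a ^ (\sum_(x in A) (if f x then 1 else -1 : int)) = \prod_(x in A) (if f x then a else a^-1).
Proof.
move=> a0; have ua : a \is a GRing.unit by rewrite unitfE.
rewrite (big_morph (fun z : int => a ^ z) (exprzDr ua) (expr0z a)).
by apply: eq_bigr => x _; case: (f x); rewrite ?expr1z // -exprnN expr1.
Qed.

Lemma vert_bound (R : realType) (N c : R) (n m : nat) : 100 <= N -> N = n%:R ->
  c = 1 - 3 * ln N / N -> (n <= m)%N -> 2 * m%:R * c ^+ m <= 121/100 / Num.sqrt N.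
Proof.
move=> hN eN hc nm.
have h1 := @mono R N c n (m - n)%N hN eN hc.
rewrite subnKC // in h1.
have h2 := @cN_bound R N c n hN eN hc.
have [l1 l2] := @lnN_facts R N hN.
have c0 : 0 <= c by rewrite hc subr_ge0 ler_pdivrMr; lra.
have s0 : 0 < Num.sqrt N by rewrite sqrtr_gt0; lra.
have sN : Num.sqrt N <= N.
  have e2 : Num.sqrt N ^+ 2 = N by rewrite sqr_sqrtr //; lra.
  nra.
rewrite ler_pdivlMr //.
have cn : 0 <= c ^+ n by rewrite exprn_ge0.
have cm : 0 <= m%:R * c ^+ m by rewrite mulr_ge0 // exprn_ge0.
have : c ^+ n * N ^+ 2 <= 1 / N.
  rewrite ler_pdivlMr; last lra.
  by rewrite -mulrA -exprSr.
move=> h3.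
have h4 : 1 / N <= 1/100 by rewrite ler_pdivrMr; lra.
nra.
Qed.

Unset Implicit Arguments.
Theorem theorem5 (R : realType) (T : finType) (e : rel T) (delta : nat) (g : int) :
  simple_graph e ->
  is_min_degree e delta ->
  (10 ^ 6 <= delta)%N ->
  is_signed_domination_number e g ->
  (g%:~R : R) <=
    (Num.sqrt (6 * ln (delta.+1%:R)) + 121 / 100) / Num.sqrt (delta.+1%:R)
      * (#|T|%:R).
Proof.
move=> [_ irr] [mindeg _] hdelta hg.
set N : R := delta.+1%:R.
have hN : 100 <= N.
  rewrite /N ler_nat; apply: leq_trans (leqnSn _).
  by apply: leq_trans hdelta.
have [e0 [e1 e2]] := @eps_facts R N hN.
set eps := Num.sqrt (6 * ln N) / Num.sqrt N in e0 e1 e2.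
set q : R := (1 + eps) / 2.
set a : R := 1 - eps.
set c : R := 1 - 3 * ln N / N.
have a0 : 0 < a by rewrite /a; lra.
have ha : 0 < a <= 1 by apply/andP; split => //; rewrite /a; lra.
have an0 : a != 0 by rewrite gt_eqF.
pose W (f : {ffun T -> bool}) := \prod_i (if f i then q else 1 - q).
pose s (f : {ffun T -> bool}) v := \sum_(x in closed_nbhd e v) (if f x then 1 else -1 : int).
pose Q (f : {ffun T -> bool}) := \sum_x (if f x then 1 else -1 : R) +
     \sum_v 2 * #|closed_nbhd e v|%:R * a ^ (s f v).
have W0 : forall f, 0 <= W f.
  move=> f; apply: prodr_ge0 => i _; case: (f i); rewrite /q; lra.
have W1 : \sum_f W f = 1.
  rewrite (eq_bigr (fun f : {ffun T -> bool} => \prod_i ((if f i then q else 1-q) * 1))); last first.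
    by move=> f _; rewrite /W; apply: eq_bigr => i _; rewrite mulr1.
  rewrite (@expect_prod R T q (fun _ _ => 1)) big1 // => i _; rewrite !mulr1 /q; lra.
have EQ : \sum_f W f * Q f = #|T|%:R * eps + \sum_v 2 * #|closed_nbhd e v|%:R * c ^+ #|closed_nbhd e v|.
  rewrite /Q (eq_bigr (fun f : {ffun T -> bool} => W f * \sum_x (if f x then 1 else -1 : R) +
       \sum_v 2 * #|closed_nbhd e v|%:R * (W f * a ^ (s f v)))); last first.
    move=> f _; rewrite mulrDr; congr (_ + _); rewrite mulr_sumr; apply: eq_bigr => v _.
    by rewrite mulrCA.
  rewrite big_split /=; congr (_ + _).
    rewrite (eq_bigr (fun f : {ffun T -> bool} => \sum_x W f * (if f x then 1 else -1 : R))); last by move=> f _; rewrite mulr_sumr.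
    have -> : #|T|%:R * eps = \sum_(x : T) eps by rewrite sumr_const mulr_natl.
    rewrite exchange_big /=.
    apply: eq_bigr => x _.
    rewrite (eq_bigr (fun f : {ffun T -> bool} => \prod_i ((if f i then q else 1 - q) *
         (if i == x then (if f i then 1 else -1) else 1)))); last first.
      move=> f _; rewrite big_split /=; congr (_ * _).
      by rewrite (bigD1 x) //= eqxx big1 ?mulr1 // => i /negbTE ->.
    rewrite (@expect_prod R T q (fun i b => if i == x then (if b then 1 else -1) else 1)) (bigD1 x) //= eqxx big1 ?mulr1; first by rewrite /q; field.
    by move=> i /negbTE ->; rewrite /q; field.
  rewrite exchange_big /=; apply: eq_bigr => v _.
  rewrite -mulr_sumr; congr (_ * _).
  rewrite (eq_bigr (fun f : {ffun T -> bool} => \prod_i ((if f i then q else 1 - q) *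
         (if i \in closed_nbhd e v then (if f i then a else a^-1) else 1)))); last first.
    move=> f _; rewrite big_split /=; congr (_ * _).
    by rewrite /s powz_prod // big_mkcond.
  rewrite (@expect_prod R T q (fun i b => if i \in closed_nbhd e v then (if b then a else a^-1) else 1)) -prodr_const [RHS]big_mkcond /=.
  apply: eq_bigr => i _; case: (i \in _); last by rewrite !mulr1 /q; field.
  rewrite /c /q /a; have en : N != 0 by rewrite gt_eqF //; lra.
  have ea : 1 - eps != 0 by exact: an0.
  rewrite -[3 * ln N / N](_ : eps ^+ 2 / 2 = _); last by rewrite e2; field.
  by field.
have main : (g%:~R : R) <= \sum_f W f * Q f.
  have -> : (g%:~R : R) = \sum_f W f * g%:~R by rewrite -mulr_suml W1 mul1r.
  apply: ler_sum => f _.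
  rewrite ler_wpM2l //. apply: (@claim1 R T e g f a ha hg).
apply: (le_trans main); rewrite EQ.
have -> : (Num.sqrt (6 * ln N) + 121 / 100) / Num.sqrt N * #|T|%:R =
   #|T|%:R * eps + \sum_(v : T) (121 / 100 / Num.sqrt N).
  rewrite sumr_const /eps mulrDl mulrDl [#|T|%:R * (_ / _)]mulrC; congr (_ + _).
  by rewrite mulr_natr.
rewrite lerD2l; apply: ler_sum => v _.
apply: (@vert_bound R N c delta.+1) => //.
rewrite /closed_nbhd cardsU1 inE irr /= add1n ltnS; exact: mindeg.
Qed.
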